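(* Fix a universe $\mathcal{U}_i$ and assume function extensionality. The following are logically equivalent: (a) there exist terms (1) $\mathit{unit} : \prod_{A : \mathcal{U}_i} A = \sum_{a:A} 1$, (2) $\mathit{flip} : \prod_{A, B : \mathcal{U}_i}\prod_{C : A \to B \to \mathcal{U}_i} \left(\sum_{a:A}\sum_{b:B} C\,a\,b\right) = \left(\sum_{b:B}\sum_{a:A} C\,a\,b\right)$, (3) $\mathit{contract} : \prod_{A : \mathcal{U}_i} \mathit{isContr}(A) \to A = 1$, (4) $\mathit{unit}\beta$ witnessing $\mathsf{coerce}(\mathit{unit}_A)(a) = (a, * )$ for all $A : \mathcal{U}_i$, $a : A$, (5) $\mathit{flip}\beta$ witnessing $\mathsf{coerce}(\mathit{flip}_{A,B,C})(a,b,c) = (b,a,c)$ for all $A,B : \mathcal{U}_i$, $C : A \to B \to \mathcal{U}_i$, $a : A$, $b : B$, $c : C\,a\,b$; (b) there exist $\mathit{ua} : \mathit{UA}_i$ and $\mathit{ua}\beta : \mathit{UA}\beta_i(\mathit{ua})$, i.e. an inhabitant of $\sum_{\mathit{ua} : \mathit{UA}_i}\mathit{UA}\beta_i(\mathit{ua})$.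
   Context: Intensional Martin-Löf type theory with $\Sigma$, $\Pi$, intensional identity types, unit type $1$ with element $*$, and cumulative universes. Function extensionality: for all $A$, $B : A \to \mathcal{U}$, and $f, g : \prod_{x:A} B(x)$ there is a map $(\prod_{x:A} f(x) = g(x)) \to f = g$. Definitions: $\mathit{isContr}(A) \triangleq \sum_{a_0 : A}\prod_{a:A}(a_0 = a)$; $\mathit{fib}_f(b) \triangleq \sum_{a:A}(f\,a = b)$; $\mathit{isEquiv}(f) \triangleq \prod_{b:B}\mathit{isContr}(\mathit{fib}_f(b))$; $A \simeq B \triangleq \sum_{f : A \to B}\mathit{isEquiv}(f)$. $\mathit{idtoeqv} : (A = B) \to (A \simeq B)$ is defined by path induction with $\mathit{idtoeqv}(\mathsf{refl}) \triangleq \mathit{id}_A$, and $\mathsf{coerce}(p,a) \triangleq \mathrm{fst}(\mathit{idtoeqv}(p))(a)$. $\mathit{UA}_i \triangleq \prod_{A,B : \mathcal{U}_i}(A \simeq B) \to A = B$, and $\mathit{UA}\beta_i(\mathit{ua}) \triangleq \prod_{A,B : \mathcal{U}_i}\prod_{f : A \to B}\prod_{e : \mathit{isEquiv}(f)}\mathsf{coerce}(\mathit{ua}(f,e)) = f$. *)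

(* Defs.v *)
(* A fixed universe U (= U_i) and a larger universe U1 containing it. *)
Definition U1 := Type.
Definition U : U1 := Type.

Definition isContr (A : Type) : Type := {a0 : A & forall a : A, a0 = a}.
Definition fib {A B : Type} (f : A -> B) (b : B) : Type := {a : A & f a = b}.
Definition isEquiv {A B : Type} (f : A -> B) : Type := forall b : B, isContr (fib f b).
Definition Equiv (A B : Type) : Type := {f : A -> B & isEquiv f}.

Definition idIsEquiv (A : Type) : isEquiv (fun x : A => x) :=
  fun b => existT _ (existT (fun a => a = b) b eq_refl)
    (fun p => match p as p0 return existT (fun a => a = b) b eq_refl = p0 with
              | existT _ a e =>
                  match e as e0 in (_ = b0)
                        return existT (fun a1 => a1 = b0) b0 eq_refl
                               = existT (fun a1 => a1 = b0) a e0 with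
                  | eq_refl => eq_refl
                  end
              end).

Definition idEquiv (A : Type) : Equiv A A := existT _ (fun x : A => x) (idIsEquiv A).

Definition idtoeqv {A B : Type} (p : A = B) : Equiv A B :=
  match p in (_ = B0) return Equiv A B0 with
  | eq_refl => idEquiv A
  end.

Definition coerce {A B : Type} (p : A = B) (a : A) : B := projT1 (idtoeqv p) a.

(* Function extensionality (as a map, not necessarily an equivalence),
   for families in the universe U1 (which contains U). *)
Definition Funext : Type :=
  forall (A : U1) (B : A -> U1) (f g : forall x : A, B x),
    (forall x : A, f x = g x) -> f = g.

Definition UA : Type := forall A B : U, Equiv A B -> A = B.
Definition UAbeta (ua : UA) : Type :=
  forall (A B : U) (f : A -> B) (e : isEquiv f), coerce (ua A B (existT _ f e)) = f.

Definition CondA : Type :=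
  { unit' : forall A : U, A = ({a : A & unit} : U) &
  { flip : forall (A B : U) (C : A -> B -> U),
             ({a : A & {b : B & C a b}} : U) = ({b : B & {a : A & C a b}} : U) &
    ((forall A : U, isContr A -> A = (unit : U)) *
     (forall (A : U) (a : A), coerce (unit' A) a = existT (fun _ => unit) a tt) *
     (forall (A B : U) (C : A -> B -> U) (a : A) (b : B) (c : C a b),
        coerce (flip A B C) (existT _ a (existT _ b c))
        = existT _ b (existT _ a c)))%type } }.

Definition CondB : Type := { ua : UA & UAbeta ua }.

Definition LogEquiv (P Q : Type) : Type := ((P -> Q) * (Q -> P))%type.

(* Main.v *)
Require Import Defs.

Lemma equiv_from_section {A B : Type} (f : A -> B) (c : forall y, fib f y)
  (H : forall x, c (f x) = existT (fun a => f a = f x) x eq_refl) : isEquiv f.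
Proof.
  intro y. exists (c y). intros [x q]. destruct q. apply H.
Qed.

Lemma coerce_trans {A B C : Type} (p : A = B) (q : B = C) (x : A) :
  coerce (eq_trans p q) x = coerce q (coerce p x).
Proof. destruct q. destruct p. reflexivity. Qed.

Lemma coerce_sym {A B : Type} (p : A = B) (x : A) :
  coerce (eq_sym p) (coerce p x) = x.
Proof. destruct p. reflexivity. Qed.

Lemma coerce_sig {X : Type} (P Q : X -> U) (e : P = Q) (x : X) (y : P x) :
  {y' : Q x & coerce (f_equal (fun R : X -> U => ({z : X & R z} : U)) e)
                     (existT _ x y) = existT _ x y'}.
Proof. destruct e. exists y. reflexivity. Qed.

Lemma singleton_contr {B : Type} (b0 : B) : isContr {b : B & b0 = b}.
Proof.
  exists (existT _ b0 eq_refl). intros [b q]. destruct q. reflexivity.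
Qed.

Definition fapp {A B : Type} {f g : A -> B} (e : f = g) (x : A) : f x = g x :=
  match e with eq_refl => eq_refl end.

Theorem mainTheorem5 (funext : Funext) : LogEquiv CondA CondB.
Proof.
  split.
  - intros [unit' [flip [[contract unitb] flipb]]].
    unshelve eexists.
    + intros A B [f e].
      refine (eq_trans (unit' A) _).
      refine (eq_trans (f_equal (fun R : A -> U => ({z : A & R z} : U))
                 (funext A (fun _ => U) (fun _ => (unit : U))
                    (fun a => ({b : B & f a = b} : U))
                    (fun a => eq_sym (contract _ (singleton_contr (f a)))))) _).
      refine (eq_trans (flip A B (fun a b => f a = b)) _).
      refine (eq_trans (f_equal (fun R : B -> U => ({z : B & R z} : U))
                 (funext B (fun _ => U)
                    (fun b => ({a : A & f a = b} : U)) (fun _ => (unit : U))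
                    (fun b => contract _ (e b)))) _).
      exact (eq_sym (unit' B)).
    + intros A B f e. cbv beta iota.
      apply (funext A (fun _ => B)). intro a.
      rewrite !coerce_trans.
      rewrite unitb.
      match goal with |- context [coerce (f_equal ?F ?E) (existT ?P a tt)] =>
        destruct (coerce_sig _ _ E a tt) as [[b' p] Hs] end.
      rewrite Hs.
      rewrite (flipb A B (fun a b => f a = b) a b' p).
      match goal with |- context [coerce (f_equal ?F ?E) (existT ?P b' ?y)] =>
        destruct (coerce_sig _ _ E b' y) as [t Ht] end.
      rewrite Ht. destruct t.
      rewrite <- (unitb B b'). rewrite coerce_sym. symmetry. exact p.
  - intros [ua uab].
    pose (f1 := fun (A : U) (a : A) => existT (fun _ : A => unit) a tt).
    assert (e1 : forall A : U, isEquiv (f1 A)).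
    { intro A. unshelve eapply equiv_from_section.
      - intros [a t]. destruct t. exact (existT _ a eq_refl).
      - intro x. reflexivity. }
    pose (f2 := fun (A B : U) (C : A -> B -> U) (x : {a : A & {b : B & C a b}}) =>
           match x return {b : B & {a : A & C a b}} with
           | existT _ a (existT _ b c) => existT _ b (existT _ a c) end).
    assert (e2 : forall A B C, isEquiv (f2 A B C)).
    { intros A B C. unshelve eapply equiv_from_section.
      - intros [b [a c]]. exact (existT _ (existT _ a (existT _ b c)) eq_refl).
      - intros [a [b c]]. reflexivity. }
    exists (fun A => ua A ({a : A & unit} : U) (existT _ (f1 A) (e1 A))).
    exists (fun A B C => ua _ _ (existT _ (f2 A B C) (e2 A B C))).
    split; [split|].
    + intros A [a0 h].
      apply (ua A (unit : U)). exists (fun _ => tt).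
      unshelve eapply equiv_from_section.
      * intros []. exact (existT _ a0 eq_refl).
      * intro x. simpl. destruct (h x). reflexivity.
    + intros A a. rewrite uab. reflexivity.
    + intros A B C a b c. rewrite uab. reflexivity.
Qed.
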